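(* Let $(S,|\cdot|)$ be a finite metric space, let $f\ge1$ be an integer, and let $\varepsilon>0$ be a real number. Assume there exists a well-separated pair decomposition for $S$ with separation ratio $c=2+4/\varepsilon$, and let $m$ be its size. Then the graph $G=(S,E)$ constructed from this decomposition as described in the context is an $f$-faulty-degree $(1+\varepsilon)$-spanner for $S$ that has at most $(2f+1)^2m$ edges.
   Context: $K_S$ is the complete graph on $S$; all graphs on $S$ have edge weights $|pq|$; $\delta_X$ is shortest-path distance in $X$; $X\setminus F$ is $X$ with the edges of $F$ removed. A graph $G=(S,E)$ is an $f$-faulty-degree $t$-spanner for $S$ if for every $F\subseteq E$ with $(S,F)$ of maximum degree at most $f$ and all $p,q\in S$, $\delta_{G\setminus F}(p,q)\le t\,\delta_{K_S\setminus F}(p,q)$. For non-empty $A,B\subseteq S$: $|AB|=\min\{|pq|:p\in A,q\in B\}$, $\mathrm{diam}(A)=\max\{|pq|:p,q\in A\}$; $A,B$ are well-separated with respect to $c>0$ if $|AB|\ge c\max(\mathrm{diam}(A),\mathrm{diam}(B))$. A well-separated pair decomposition (WSPD) of $S$ with separation ratio $c$ is a sequence $\{A_1,B_1\},\dots,\{A_m,B_m\}$ of pairs of non-empty subsets of $S$ such that each $A_i,B_i$ are well-separated w.r.t. $c$, and for any two distinct $p,q\in S$ there is exactly one $i$ with ($p\in A_i$ and $q\in B_i$) or ($p\in B_i$ and $q\in A_i$); $m$ is its size. Construction of $G$: for each $i$, let $A_i'=A_i$ if $|A_i|\le 2f+1$ and otherwise let $A_i'$ be an arbitrary subset of $A_i$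 of size $2f+1$; define $B_i'$ from $B_i$ analogously. $E$ consists of all edges $\{x,y\}$ with $x\in A_i'$, $y\in B_i'$, over all $i=1,\dots,m$. *)

(* Defs.v *)
From HB Require Import structures.
From mathcomp Require Import all_boot all_order all_algebra.
From mathcomp Require Import reals constructive_ereal ereal.
Set Implicit Arguments. Unset Strict Implicit. Unset Printing Implicit Defensive.
Import Order.TTheory GRing.Theory Num.Theory.
Local Open Scope ring_scope.

Section Defs.
Variables (R : realType) (T : finType) (d : T -> T -> R).

Definition is_metric : Prop :=
  [/\ forall x y, d x y = 0 <-> x = y,
      forall x y, d x y = d y x &
      forall x y z, d x z <= d x y + d y z].

Definition complete_edges : {set {set T}} := [set e : {set T} | #|e| == 2%N].

Fixpoint walk_weight (p : T) (s : seq T) : R :=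
  match s with
  | [::] => 0
  | y :: s' => d p y + walk_weight y s'
  end.

Definition is_walk (X : {set {set T}}) (p q : T) (s : seq T) : bool :=
  path (fun u v => [set u; v] \in X) p s && (last p s == q).

(* shortest-path distance delta_X(p,q) (= +oo if no path) *)
Definition sp_dist (X : {set {set T}}) (p q : T) : \bar R :=
  ereal_inf (fun x : \bar R => exists s, is_walk X p q s /\ x = (walk_weight p s)%:E).

Definition max_deg_le (F : {set {set T}}) (f : nat) : Prop :=
  forall v : T, (#|[set e in F | v \in e]| <= f)%N.

Definition faulty_degree_spanner (E : {set {set T}}) (f : nat) (t : R) : Prop :=
  forall F : {set {set T}}, F \subset E -> max_deg_le F f ->
    forall p q : T,
      (sp_dist (E :\: F) p q <= t%:E * sp_dist (complete_edges :\: F) p q)%E.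

Definition diam (A : {set T}) : R := \big[Num.max/0]_(p in A) \big[Num.max/0]_(q in A) d p q.

Definition set_dist (A B : {set T}) : R :=
  \big[Num.min/diam [set: T]]_(p in A) \big[Num.min/diam [set: T]]_(q in B) d p q.

Definition well_separated (c : R) (A B : {set T}) : Prop :=
  set_dist A B >= c * Num.max (diam A) (diam B).

Definition is_wspd (c : R) (m : nat) (A B : 'I_m -> {set T}) : Prop :=
  [/\ forall i, A i != set0,
      forall i, B i != set0,
      forall i, well_separated c (A i) (B i) &
      forall p q : T, p != q ->
        #|[set i : 'I_m | ((p \in A i) && (q \in B i)) || ((p \in B i) && (q \in A i))]| = 1%N].

Definition truncation (f : nat) (m : nat) (A A' : 'I_m -> {set T}) : Prop :=
  forall i, if (#|A i| <= f.*2.+1)%N then A' i = A i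
            else (A' i \subset A i) /\ #|A' i| = f.*2.+1.

Definition wspd_edges (m : nat) (A' B' : 'I_m -> {set T}) : {set {set T}} :=
  [set e : {set T} | [exists i : 'I_m, exists x in A' i, exists y in B' i,
                        (x != y) && (e == [set x; y])]].

End Defs.

(* Main.v *)
Require Import Defs.
From HB Require Import structures.
From mathcomp Require Import all_boot all_order all_algebra.
From mathcomp Require Import reals constructive_ereal ereal.
From mathcomp Require boolp classical_sets.
From mathcomp Require Import ring lra zify.
Import Order.TTheory GRing.Theory Num.Theory.
Local Open Scope ring_scope.

Section Aux.
Variables (R : realType) (T : finType) (d : T -> T -> R).
Hypothesis hd : is_metric d.

Lemma dxx x : d x x = 0.
Proof. by case: hd => h _ _; apply/(h x x). Qed.

Lemma dC x y : d x y = d y x.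
Proof. by case: hd. Qed.

Lemma dtri x y z : d x z <= d x y + d y z.
Proof. by case: hd. Qed.

Lemma d_ge0 x y : 0 <= d x y.
Proof. have := dtri x y x; rewrite dxx (dC y x) => h; lra. Qed.

Lemma d_eq0 x y : d x y = 0 -> x = y.
Proof. by move=> e; case: hd => h _ _; apply/(h x y). Qed.

Lemma walk_weight_cat p s1 s2 : walk_weight d p (s1 ++ s2) =
  walk_weight d p s1 + walk_weight d (last p s1) s2.
Proof.
elim: s1 p => [|y s IH] p /=; first by rewrite add0r.
by rewrite IH addrA.
Qed.

Lemma walk_weight_ge0 p s : 0 <= walk_weight d p s.
Proof. elim: s p => [|y s IH] p //=; apply: addr_ge0 => //; exact: d_ge0. Qed.

Lemma diam_ge u v (A : {set T}) : u \in A -> v \in A -> d u v <= diam d A.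
Proof.
move=> uA vA; rewrite /diam; apply: (bigmax_sup u) => //.
by apply: (bigmax_sup v).
Qed.

Lemma set_dist_le (A B : {set T}) u v : u \in A -> v \in B -> set_dist d A B <= d u v.
Proof.
move=> uA vB; rewrite /set_dist; apply: (bigmin_inf u) => //.
by apply: (bigmin_inf v).
Qed.

Arguments set_dist_le [A B u v].
Arguments diam_ge [u v A].
Arguments d_eq0 [x y].

Lemma nbr_card (F : {set {set T}}) f v (Z : {set T}) : max_deg_le F f ->
  v \notin Z -> (#|[set z in Z | [set v; z] \in F]| <= f)%N.
Proof.
move=> hF vZ.
rewrite -(@card_in_imset _ _ (fun z => [set v; z])); last first.
  move=> z1 z2; rewrite !inE => /andP[z1Z _] /andP[z2Z _] e.
  have : z1 \in [set v; z2] by rewrite -e set22.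
  rewrite !inE => /orP[/eqP h|/eqP //]; by move: z1Z; rewrite h (negbTE vZ).
apply: (leq_trans _ (hF v)); apply: subset_leq_card. apply/subsetP => e.
by case/imsetP => z; rewrite inE => /andP[_ zF] ->; rewrite inE zF set21.
Qed.

Arguments nbr_card [F f v Z].

Lemma pick_nbr (F : {set {set T}}) f v (Z : {set T}) : max_deg_le F f ->
  v \notin Z -> (f < #|Z|)%N -> exists2 z, z \in Z & [set v; z] \notin F.
Proof.
move=> hF vZ hZ.
have [/existsP[z /andP[zZ zF]]|/existsPn hn] :=
  boolP [exists z, (z \in Z) && ([set v; z] \notin F)]; first by exists z.
exfalso.
have : [set z in Z | [set v; z] \in F] = Z.
  apply/setP => z; rewrite inE; case zZ: (z \in Z) => //=.
  by have := hn z; rewrite zZ /= negbK.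
move=> e; have := nbr_card hF vZ; rewrite e; by rewrite leqNgt hZ.
Qed.

Arguments pick_nbr [F f v Z].

Lemma big_cand (F : {set {set T}}) f v (Z : {set T}) : max_deg_le F f ->
  v \notin Z -> #|Z| = f.*2.+1 -> (f < #|[set z in Z | [set v; z] \notin F]|)%N.
Proof.
move=> hF vZ hZ.
have h1 : (#|Z| <= #|[set z in Z | [set v; z] \notin F]| +
                    #|[set z in Z | [set v; z] \in F]|)%N.
  apply: leq_trans (leq_card_setU _ _); apply: subset_leq_card.
  apply/subsetP => z zZ; rewrite !inE zZ /=; by case: ([set v; z] \in F).
have := nbr_card hF vZ; move: h1; rewrite hZ -addnn; lia.
Qed.

Arguments big_cand [F f v Z].

Variables (f m : nat) (A B A' B' : 'I_m -> {set T}) (eps : R).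
Hypothesis heps : 0 < eps.
Hypothesis hW : is_wspd d (2 + 4 / eps) A B.
Hypothesis hA' : truncation f A A'.
Hypothesis hB' : truncation f B B'.
Variable F : {set {set T}}.
Hypothesis hF : max_deg_le F f.

Let E := wspd_edges A' B'.

Lemma c_gt0 : 0 < 2 + 4 / eps.
Proof. have : 0 < 4 / eps by apply: divr_gt0. lra. Qed.

Lemma trunc_props (C C' : 'I_m -> {set T}) i p : truncation f C C' -> p \in C i ->
  C' i \subset C i /\ (p \in C' i \/ #|C' i| = f.*2.+1).
Proof.
move=> h pC; have := h i; case: ifP => _ => [->|[s c]]; last by split; [|right].
by split; [exact: subxx | left].
Qed.

Arguments trunc_props [C C' i p].

Lemma core (p q : T) (X Y X' Y' : {set T}) (D : R)
 (IH : forall a b, d a b < d p q -> (a = b \/ [set a; b] \notin F) ->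
   exists s, is_walk (E :\: F) a b s /\ walk_weight d a s <= (1 + eps) * d a b)
 (pq : p != q) (pqF : [set p; q] \notin F)
 (pX : p \in X) (qY : q \in Y) (sX : X' \subset X) (sY : Y' \subset Y)
 (hX' : p \in X' \/ #|X'| = f.*2.+1) (hY' : q \in Y' \/ #|Y'| = f.*2.+1)
 (dX : forall u v, u \in X -> v \in X -> d u v <= D)
 (dY : forall u v, u \in Y -> v \in Y -> d u v <= D)
 (hc : (2 + 4 / eps) * D <= d p q)
 (disj : forall z, z \in X -> z \in Y -> False)
 (hE : forall x y, x \in X' -> y \in Y' -> x != y -> [set x; y] \in E) :
 exists s, is_walk (E :\: F) p q s /\ walk_weight d p s <= (1 + eps) * d p q.
Proof.
have nXY : forall Z : {set T}, Z \subset Y -> forall z, z \in X -> z \notin Z.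
  move=> Z ZY z zX; apply/negP => zZ; apply: (disj z zX); exact: (subsetP ZY).
have nYX : forall Z : {set T}, Z \subset X -> forall z, z \in Y -> z \notin Z.
  move=> Z ZX z zY; apply/negP => zZ; apply: (disj z _ zY); exact: (subsetP ZX).
have [x [y [xX' yY' hx hy xyF]]] : exists x y, [/\ x \in X', y \in Y',
    x = p \/ [set p; x] \notin F, y = q \/ [set q; y] \notin F & [set x; y] \notin F].
  case: (boolP (p \in X')) => pX'; case: (boolP (q \in Y')) => qY'.
  - by exists p, q; split; auto.
  - have hY2 : #|Y'| = f.*2.+1 by case: hY' => // h; rewrite h in qY'.
    have := big_cand hF qY' hY2; set CY := [set z in Y' | _] => hCY.
    have sCY : CY \subset Y.
      apply: subset_trans sY; apply/subsetP => z; rewrite inE; by case/andP.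
    have [y] := pick_nbr hF (nXY _ sCY p pX) hCY.
    rewrite inE => /andP[yY' qyF] pyF.
    by exists p, y; split; auto.
  - have hX2 : #|X'| = f.*2.+1 by case: hX' => // h; rewrite h in pX'.
    have := big_cand hF pX' hX2; set CX := [set z in X' | _] => hCX.
    have sCX : CX \subset X.
      apply: subset_trans sX; apply/subsetP => z; rewrite inE; by case/andP.
    have [x] := pick_nbr hF (nYX _ sCX q qY) hCX.
    rewrite inE => /andP[xX' pxF] qxF.
    by exists x, q; split; auto; rewrite setUC.
  - have hX2 : #|X'| = f.*2.+1 by case: hX' => // h; rewrite h in pX'.
    have hY2 : #|Y'| = f.*2.+1 by case: hY' => // h; rewrite h in qY'.
    have := big_cand hF pX' hX2; set CX := [set z in X' | _] => hCX.
    have := big_cand hF qY' hY2; set CY := [set z in Y' | _] => hCY.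
    have sCY : CY \subset Y.
      apply: subset_trans sY; apply/subsetP => z; rewrite inE; by case/andP.
    have : (0 < #|CX|)%N by apply: leq_ltn_trans hCX.
    case/card_gt0P => x; rewrite inE => /andP[xX' pxF].
    have xX : x \in X by apply: (subsetP sX).
    have [y] := pick_nbr hF (nXY _ sCY x xX) hCY.
    rewrite inE => /andP[yY' qyF] xyF.
    by exists x, y; split; auto.
have xX : x \in X by apply: (subsetP sX).
have yY : y \in Y by apply: (subsetP sY).
have D0 : 0 <= D by have := dX p p pX pX; rewrite dxx.
have hpq : 0 < d p q.
  rewrite lt_def d_ge0 // andbT; apply/eqP => /d_eq0 e; by rewrite e eqxx in pq.
have h4 : 0 <= 4 / eps * D.
  apply: mulr_ge0 => //; apply: divr_ge0 => //; exact: ltW.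
have hc2 : (2 + 4 / eps) * D = 2 * D + 4 / eps * D by rewrite mulrDl.
have h2D : 2 * D <= d p q by lra.
have dpx : d p x <= D by apply: dX.
have dyq : d y q <= D by apply: dY.
have [s1 [ws1 w1]] : exists s, is_walk (E :\: F) p x s /\
    walk_weight d p s <= (1 + eps) * d p x.
  apply: IH; first lra.
  by case: hx => [->|h]; [left|right].
have [s2 [ws2 w2]] : exists s, is_walk (E :\: F) y q s /\
    walk_weight d y s <= (1 + eps) * d y q.
  apply: IH; first lra.
  by case: hy => [->|h]; [left|right; rewrite setUC].
have key : (4 + 2 * eps) * D <= eps * d p q.
  have e : eps * (2 + 4 / eps) = 4 + 2 * eps.
    by field; rewrite gt_eqF.
  rewrite -e -mulrA; apply: ler_wpM2l; [exact: ltW | exact: hc].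
have hw1 : walk_weight d p s1 <= (1 + eps) * D.
  apply: le_trans w1 _; apply: ler_wpM2l; [exact: addr_ge0 ler01 (ltW heps) | exact: dpx].
have hw2 : walk_weight d y s2 <= (1 + eps) * D.
  apply: le_trans w2 _; apply: ler_wpM2l; [exact: addr_ge0 ler01 (ltW heps) | exact: dyq].
have dxy : d x y <= d p x + d p q + d y q.
  have := dtri x p y; have := dtri p q y.
  rewrite (dC x p) (dC q y); lra.
move: ws1; rewrite /is_walk => /andP[ps1 /eqP ls1].
move: ws2; rewrite /is_walk => /andP[ps2 /eqP ls2].
exists (s1 ++ y :: s2); split.
  rewrite /is_walk cat_path last_cat /= ls1 ls2 ps1 ps2 eqxx !andbT /=.
  rewrite in_setD xyF /=; apply: hE => //.
  by apply/eqP => e; apply: (disj x xX); rewrite e.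
rewrite walk_weight_cat ls1 /=.
lra.
Qed.


Lemma wspd_disj i u v : u \in A i -> v \in B i -> u != v ->
  forall z, z \in A i -> z \in B i -> False.
Proof.
move=> uA vB uv z zA zB.
case: hW => _ _ hws _; have := hws i; rewrite /well_separated => h.
have h0 := set_dist_le zA zB; rewrite dxx in h0.
set D := Num.max _ _ in h.
have : (2 + 4 / eps) * D <= 0 by apply: le_trans h h0.
rewrite pmulr_rle0; last exact: c_gt0.
move=> D0.
have duz : d u z <= D by rewrite le_max diam_ge.
have dzv : d z v <= D by rewrite le_max orbC diam_ge.
have e1 : d u z = 0 by apply/le_anti; rewrite d_ge0 andbT (le_trans duz D0).
have e2 : d z v = 0 by apply/le_anti; rewrite d_ge0 andbT (le_trans dzv D0).
by move: uv; rewrite (d_eq0 e1) (d_eq0 e2) eqxx.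
Qed.

Lemma edgeE i x y : x \in A' i -> y \in B' i -> x != y -> [set x; y] \in E.
Proof.
move=> xA yB xy; rewrite /E /wspd_edges inE; apply/existsP; exists i.
apply/existsP; exists x; rewrite xA /=; apply/existsP; exists y.
by rewrite yB xy eqxx.
Qed.

Lemma claim n : forall p q,
  (#|[set u : T * T | (d u.1 u.2 < d p q)%R]| < n)%N ->
  (p = q \/ [set p; q] \notin F) ->
  exists s, is_walk (E :\: F) p q s /\ walk_weight d p s <= (1 + eps) * d p q.
Proof.
elim: n => [//|n IHn] p q hn hpq.
case: (eqVneq p q) => [<-|pq].
  by exists [::]; split; [rewrite /is_walk /= eqxx | rewrite /= dxx mulr0].
have pqF : [set p; q] \notin F by case: hpq => // e; rewrite e eqxx in pq.
have IH : forall a b, d a b < d p q -> (a = b \/ [set a; b] \notin F) ->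
    exists s, is_walk (E :\: F) a b s /\ walk_weight d a s <= (1 + eps) * d a b.
  move=> a b hab; apply: IHn; rewrite ltnS in hn; apply: (leq_trans _ hn).
  apply: proper_card; apply/properP; split.
    apply/subsetP => u; rewrite !inE => h; exact: lt_trans h hab.
  by exists (a, b); rewrite !inE //= ltxx.
case: hW => _ _ hws hpart.
have : (0 < #|[set i : 'I_m | ((p \in A i) && (q \in B i)) || ((p \in B i) && (q \in A i))]|)%N.
  by rewrite hpart.
case/card_gt0P => i; rewrite inE => /orP[/andP[pA qB]|/andP[pB qA]].
- have [sX hX'] := trunc_props hA' pA.
  have [sY hY'] := trunc_props hB' qB.
  apply: (@core p q (A i) (B i) (A' i) (B' i)
     (Num.max (diam d (A i)) (diam d (B i)))) => //.
  + by move=> u v uA vA; rewrite le_max diam_ge.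
  + by move=> u v uA vA; rewrite le_max orbC diam_ge.
  + by apply: le_trans (hws i) (set_dist_le pA qB).
  + exact: wspd_disj pA qB pq.
  + by move=> x y xA yB xy; exact: (@edgeE i x y xA yB xy).
- have [sX hX'] := trunc_props hB' pB.
  have [sY hY'] := trunc_props hA' qA.
  apply: (@core p q (B i) (A i) (B' i) (A' i)
     (Num.max (diam d (A i)) (diam d (B i)))) => //.
  + by move=> u v uA vA; rewrite le_max orbC diam_ge.
  + by move=> u v uA vA; rewrite le_max diam_ge.
  + by rewrite dC; apply: le_trans (hws i) (set_dist_le qA pB).
  + by move=> z zB zA; apply: (@wspd_disj i q p qA pB _ z zA zB); rewrite eq_sym.
  + by move=> x y xB yA xy; rewrite setUC; apply: (@edgeE i y x yA xB); rewrite eq_sym.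
Qed.

Lemma lift_walk s : forall p q, is_walk (complete_edges T :\: F) p q s ->
  exists s', is_walk (E :\: F) p q s' /\
    walk_weight d p s' <= (1 + eps) * walk_weight d p s.
Proof.
elim: s => [|y s IHs] p q.
  rewrite /is_walk /= => /eqP <-; exists [::]; split; first by rewrite /is_walk /= eqxx.
  by rewrite /= mulr0.
rewrite /is_walk /= => /andP[/andP[hpy ps] lq].
have [s2 [ws2 w2]] : exists s', is_walk (E :\: F) y q s' /\
    walk_weight d y s' <= (1 + eps) * walk_weight d y s.
  by apply: IHs; rewrite /is_walk ps lq.
have [s1 [ws1 w1]] := @claim (#|[set u : T * T | (d u.1 u.2 < d p y)%R]|.+1) p y
  (leqnn _) (or_intror (proj1 (andP (etrans (esym (in_setD _ _ _)) hpy)))).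
move: ws1; rewrite /is_walk => /andP[ps1 /eqP ls1].
move: ws2; rewrite /is_walk => /andP[ps2 /eqP ls2].
exists (s1 ++ s2); split.
  by rewrite /is_walk cat_path last_cat ls1 ls2 ps1 ps2 eqxx.
rewrite walk_weight_cat ls1 mulrDr; exact: lerD.
Qed.

Lemma trunc_card (C C' : 'I_m -> {set T}) i : truncation f C C' ->
  (#|C' i| <= f.*2.+1)%N.
Proof. by move=> h; have := h i; case: ifP => hc; [move=> -> | case=> _ ->]. Qed.

Lemma card_bigcup_le (S : 'I_m -> {set {set T}}) :
  (#|\bigcup_(i < m) S i| <= \sum_(i < m) #|S i|)%N.
Proof.
elim/big_rec2: _ => [|i X n _ H]; first by rewrite cards0.
apply: leq_trans (leq_card_setU _ _) _; by rewrite leq_add2l.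
Qed.

End Aux.

Theorem theorem3 (R : realType) (T : finType) (d : T -> T -> R)
  (hd : is_metric d) (f : nat) (hf : (1 <= f)%N) (eps : R) (heps : 0 < eps)
  (m : nat) (A B A' B' : 'I_m -> {set T})
  (hW : is_wspd d (2 + 4 / eps) A B)
  (hA' : truncation f A A') (hB' : truncation f B B') :
  faulty_degree_spanner d (wspd_edges A' B') f (1 + eps) /\
  (#|wspd_edges A' B'| <= (f.*2.+1) ^ 2 * m)%N.
Proof.
split.
  move=> Fs _ hdeg p q.
  have t0 : 0 < 1 + eps by apply: addr_gt0.
  rewrite /sp_dist -ereal_inf_pZl //.
  apply: le_ereal_inf_tmp => z [x [s [hs ->]] <-].
  have [s' [hs' w']] := @lift_walk _ _ _ hd _ _ _ _ _ _ _ heps hW hA' hB' _ hdeg _ _ _ hs.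
  apply: ge_ereal_inf; exists (walk_weight d p s')%:E.
    by exists s'.
  by rewrite -EFinM lee_fin.
have sub : wspd_edges A' B' \subset
    \bigcup_(i < m) [set [set x; y] | x in A' i, y in B' i].
  apply/subsetP => e; rewrite inE => /existsP[i /existsP[x /andP[xA]]].
  move=> /existsP[y /andP[yB /andP[_ /eqP ->]]].
  by apply/bigcupP; exists i => //; apply/imset2P; exists x y.
apply: leq_trans (subset_leq_card sub) _.
apply: (leq_trans (card_bigcup_le _ _ _)).
apply: (@leq_trans (\sum_(i < m) (f.*2.+1) ^ 2)).
  apply: leq_sum => i _.
  rewrite curry_imset2X; apply: leq_trans (leq_imset_card _ _) _.
  rewrite cardsX expnS expn1; apply: leq_mul; [exact: (trunc_card _ _ _ _ _ _ hA') | exact: (trunc_card _ _ _ _ _ _ hB')].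
by rewrite big_const_ord iter_addn_0 mulnC.
Qed.
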